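(* Every maximal abelian subgroup of a Frattini-injective pro-$p$ group is isolated.
   Context: $p$ is a prime; subgroups are closed. A pro-$p$ group $G$ is Frattini-injective if distinct finitely generated subgroups of $G$ have distinct Frattini subgroups. A subgroup $H$ of $G$ is isolated if for every $x\in G$, $x^p\in H$ implies $x\in H$. *)

(* Defs.v *)
From HB Require Import structures.
From mathcomp Require Import all_boot monoid.
From mathcomp Require Import all_classical topology.
Set Implicit Arguments. Unset Strict Implicit. Unset Printing Implicit Defensive.

Local Open Scope classical_set_scope.
Local Open Scope group_scope.

(* A type equipped both with a (possibly infinite) group structure and a
   topology.  Continuity of the group operations is a separate condition. *)
#[short(type="topGroupType")]
HB.structure Definition TopGroup := {G of Group G & Topological G}.

Section Defs.
Variable G : topGroupType.
Implicit Types (H K N A : set G) (x y : G).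

Definition continuous_group_ops : Prop :=
  continuous (fun xy : G * G => xy.1 * xy.2^-1).

Definition is_subgroup H : Prop :=
  H 1 /\ forall x y, H x -> H y -> H (x * y^-1).

(* subgroups in the sense of the paper are closed subgroups *)
Definition closed_subgroup H : Prop := is_subgroup H /\ closed H.

Definition normal_subgroup N : Prop :=
  is_subgroup N /\ forall g x, N x -> N (g^-1 * x * g).

(* N has finite index in G equal to p ^ k for some k *)
Definition p_power_index (p : nat) N : Prop :=
  exists (k : nat) (f : 'I_(p ^ k)%N -> G),
    (forall i j, N ((f i)^-1 * f j) -> i = j) /\
    (forall x, exists i, N ((f i)^-1 * x)).

(* pro-p group: a profinite group (compact, Hausdorff, totally disconnected
   topological group) all of whose continuous finite quotients G/N
   (N open normal) are p-groups, i.e. have p-power order. *)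
Definition pro_p_group (p : nat) : Prop :=
  [/\ prime p, continuous_group_ops, compact [set: G], hausdorff_space G &
      totally_disconnected [set: G] /\
      forall N, normal_subgroup N -> open N -> p_power_index p N].

Definition closed_gen A : set G :=
  [set x | forall H, closed_subgroup H -> A `<=` H -> H x].

Definition fg_subgroup H : Prop :=
  closed_subgroup H /\ exists (n : nat) (f : 'I_n -> G), H = closed_gen (range f).

Definition open_subgroup_of H K : Prop :=
  is_subgroup K /\ K `<=` H /\ exists U, open U /\ K = U `&` H.

Definition maximal_open_subgroup_of H K : Prop :=
  [/\ open_subgroup_of H K, K <> H &
      forall L, open_subgroup_of H L -> K `<=` L -> L = K \/ L = H].

Definition frattini H : set G :=
  [set x | H x /\ forall K, maximal_open_subgroup_of H K -> K x].

Definition frattini_injective : Prop :=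
  forall H K, fg_subgroup H -> fg_subgroup K -> frattini H = frattini K -> H = K.

Definition abelian_set A : Prop := forall x y, A x -> A y -> x * y = y * x.

Definition maximal_abelian_subgroup A : Prop :=
  [/\ closed_subgroup A, abelian_set A &
      forall B, closed_subgroup B -> abelian_set B -> A `<=` B -> B = A].

Definition isolated_subgroup (p : nat) H : Prop := forall x, H (x ^+ p) -> H x.

End Defs.

(* Main.v *)
Require Import Defs.
From HB Require Import structures.
From mathcomp Require Import all_boot monoid.
From mathcomp Require Import all_classical topology.
Set Implicit Arguments. Unset Strict Implicit. Unset Printing Implicit Defensive.
Local Open Scope classical_set_scope.
Local Open Scope group_scope.


Lemma divc (G : topGroupType) (hc : continuous_group_ops G) (f g : G -> G) :
  continuous f -> continuous g -> continuous (fun u => f u * (g u)^-1).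
Proof.
move=> cf cg x.
apply: (@continuous2_cvg _ _ _ _ _ _ f g (fun a b => a * b^-1)).
- exact: (hc (f x, g x)).
- exact: cf.
- exact: cg.
Qed.

Lemma invc (G : topGroupType) (hc : continuous_group_ops G) :
  continuous (fun u : G => u^-1).
Proof.
have := divc hc (@cst_continuous G G 1) (fun x => cvg_id).
by under eq_fun do rewrite mul1g.
Qed.

Lemma mulc (G : topGroupType) (hc : continuous_group_ops G) (f g : G -> G) :
  continuous f -> continuous g -> continuous (fun u => f u * g u).
Proof.
move=> cf cg.
have cg' : continuous (fun u => (g u)^-1).
  by move=> x; apply: continuous_comp; [exact: cg| exact: invc].
have := divc hc cf cg'.
by under eq_fun do rewrite invgK.
Qed.



Lemma alg (G : groupType) (y h1 h2 : G) i j p : 0 < p -> commute y h1 -> commute y h2 ->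
  y ^+ (i + j * p.-1) * (h1 * h2^-1) = (y ^+ i * h1) * ((y ^+ p) ^+ j * (y ^+ j * h2)^-1).
Proof.
move=> p0 c1 c2.
have c1' : commute h1 (y ^+ (j * p.-1)) by apply: commuteX; exact: commute_sym.
have c2' : commute h2 (y ^+ j) by apply: commuteX; exact: commute_sym.
have e : (y ^+ p) ^+ j = y ^+ (j * p.-1) * y ^+ j.
  by rewrite -expgnA -expgnDr -{1}(prednK p0) mulnC mulnS addnC.
rewrite e -c2' invgM !mulgA mulgK.
rewrite expgnDr -!mulgA; congr (_ * _); rewrite !mulgA; congr (_ * _).
by rewrite c1'.
Qed.



Section S.
Context (G : topGroupType).
Implicit Types (H K A L S : set G) (x y c s w g : G).

Lemma sg1 H : is_subgroup H -> H 1. Proof. by case. Qed.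
Lemma sgV H x : is_subgroup H -> H x -> H x^-1.
Proof. by move=> [h1 hd] hx; have := hd _ _ h1 hx; rewrite mul1g. Qed.
Lemma sgM H x y : is_subgroup H -> H x -> H y -> H (x * y).
Proof. by move=> sH hx hy; have := sH.2 _ _ hx (sgV sH hy); rewrite invgK. Qed.
Lemma sgX H x n : is_subgroup H -> H x -> H (x ^+ n).
Proof.
move=> sH hx; elim: n => [|n IH]; first by rewrite expg0; exact: sg1.
by rewrite expgS; exact: sgM.
Qed.

Lemma closed_gen_sub S : S `<=` closed_gen S.
Proof. by move=> x Sx L _ /(_ x Sx). Qed.
Lemma closed_gen_min S L : closed_subgroup L -> S `<=` L -> closed_gen S `<=` L.
Proof. by move=> cL SL x /(_ L cL SL). Qed.
Lemma closed_gen_cs S : closed_subgroup (closed_gen S).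
Proof.
split; first split.
- by move=> L [[]].
- move=> x y hx hy L cL SL; have [[_ hd] _] := cL; apply: hd; [exact: hx|exact: hy].
have -> : closed_gen S = \bigcap_(L in [set L | closed_subgroup L /\ S `<=` L]) L.
  by apply/seteqP; split=> x hx; [move=> L [cL SL]; exact: hx|move=> L cL SL; exact: hx].
by apply: closed_bigI => L [[]].
Qed.

Definition cent S : set G := [set g | forall s, S s -> g * s = s * g].

Lemma idc : continuous (fun u : G => u). Proof. by move=> x. Qed.

Lemma lmulc (hc : continuous_group_ops G) c : continuous (fun u : G => c * u).
Proof. exact: (mulc hc (@cst_continuous G G c) idc). Qed.

Lemma closed_lmul (hc : continuous_group_ops G) c (P : set G) :
  closed P -> closed [set h | P (c * h)].
Proof. by move=> cP; have /continuous_closedP := @lmulc hc c; apply. Qed.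

Lemma open_lmul (hc : continuous_group_ops G) c (P : set G) :
  open P -> open [set h | P (c * h)].
Proof. by move=> cP; have /continuousP := @lmulc hc c; apply. Qed.

Lemma closed_comm (hc : continuous_group_ops G) (hs : hausdorff_space G) s :
  closed [set g | g * s = s * g].
Proof.
have -> : [set g | g * s = s * g] =
    (fun g => (g * s) * (s * g)^-1) @^-1` [set 1].
  apply/seteqP; split=> g /=; first by move=> ->; rewrite mulgV.
  by move/divg1_eq.
have := divc hc (mulc hc idc (@cst_continuous G G s)) (mulc hc (@cst_continuous G G s) idc).
move/continuous_closedP; apply.
exact/accessible_closed_set1/hausdorff_accessible.
Qed.

Lemma cent_cs (hc : continuous_group_ops G) (hs : hausdorff_space G) S :
  closed_subgroup (cent S).
Proof.
split; first split.
- by move=> s _; rewrite mul1g mulg1.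
- move=> x y hx hy s Ss.
  have e1 := hx s Ss; have e2 := hy s Ss.
  have e3 : y^-1 * s = s * y^-1.
    by apply: (@mulgI _ y); rewrite mulgA mulgV mul1g mulgA e2 -mulgA mulgV mulg1.
  by rewrite -mulgA e3 mulgA e1 mulgA.
have -> : cent S = \bigcap_(s in S) [set g | g * s = s * g].
  by apply/seteqP; split=> g hg s Ss; exact: hg.
by apply: closed_bigI => s _; exact: closed_comm.
Qed.

Lemma open_sub_closed (hc : continuous_group_ops G) H L :
  is_subgroup H -> closed H -> open_subgroup_of H L -> closed L.
Proof.
move=> sH cH [sL [LH [U [oU eL]]]].
rewrite -openC.
have -> : ~` L = \bigcup_(w in ~` L)
    [set g | (H w /\ U (w^-1 * g)) \/ (~ H w /\ ~ H g)].
  apply/seteqP; split=> g.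
    move=> ng; exists g => //=; have [Hg|nHg] := pselect (H g); [left|right] => //.
    split=> //; rewrite mulVg; have := sg1 sL; rewrite eL; by case.
  move=> [w nw [[Hw Uw]|[nHw nHg]]] Lg; last by apply: nHg; exact: LH.
  apply: nw; have : L (w^-1 * g).
    by rewrite eL; split=> //; apply: sgM => //; [exact: sgV|exact: LH].
  move=> Lwg; have := sgM sL Lg (sgV sL Lwg).
  by rewrite invgM invgK mulgA mulgV mul1g.
apply: bigcup_open => w _.
have [Hw|nHw] := pselect (H w).
  have -> : [set g | H w /\ U (w^-1 * g) \/ ~ H w /\ ~ H g] = [set g | U (w^-1 * g)].
    by apply/seteqP; split=> g /= ; [case=> [[]|[]]|left].
  exact: open_lmul.
have -> : [set g | H w /\ U (w^-1 * g) \/ ~ H w /\ ~ H g] = ~` H.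
  by apply/seteqP; split=> g /= ; [case=> [[]|[]]|right].
exact: closed_openC.
Qed.
End S.



Section Cyc.
Context (G : topGroupType) (hc : continuous_group_ops G) (hs : hausdorff_space G).

Lemma abelian_gen (S : set G) : (forall a b, S a -> S b -> a * b = b * a) ->
  abelian_set (closed_gen S).
Proof.
move=> hS.
have h1 : closed_gen S `<=` cent S.
  by apply: closed_gen_min; [exact: cent_cs | move=> a Sa b Sb; exact: hS].
move=> a b ha hb.
have h2 : closed_gen S `<=` cent [set a].
  apply: closed_gen_min; first exact: cent_cs.
  by move=> s Ss t ->; rewrite (h1 a ha s Ss).
by have := h2 b hb a erefl => ->.
Qed.

Context (p : nat) (pp : prime p) (y : G).
Let H := closed_gen [set y].
Let P := closed_gen [set y ^+ p].

Let sH : is_subgroup H. Proof. exact: (closed_gen_cs [set y]).1. Qed.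
Let sP : is_subgroup P. Proof. exact: (closed_gen_cs [set y ^+ p]).1. Qed.
Let Hy : H y. Proof. exact: closed_gen_sub. Qed.
Let PH : P `<=` H.
Proof. apply: closed_gen_min; first exact: closed_gen_cs. by move=> _ ->; exact: (sgX _ sH Hy). Qed.
Let abH : abelian_set H.
Proof. by apply: abelian_gen => a b -> ->. Qed.
Let p0 : 0 < p. Proof. exact: prime_gt0. Qed.

Lemma Qred (h : G) n : P (y ^+ n * h) -> exists i : 'I_p, P (y ^+ i * h).
Proof.
move=> hn; exists (Ordinal (ltn_pmod n p0)) => /=.
have -> : y ^+ (n %% p) * h = ((y ^+ p) ^+ (n %/ p))^-1 * (y ^+ n * h).
  by rewrite {3}(divn_eq n p) expgnDr mulnC expgnA -mulgA mulKg.
apply: (sgM sP) => //; apply: (sgV sP); apply: (sgX _ sP); exact: closed_gen_sub.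
Qed.

Lemma HsubQ : H `<=` [set h | exists i : 'I_p, P (y ^+ i * h)].
Proof.
apply: closed_gen_min; last first.
  move=> _ ->; have ip : p.-1 < p by rewrite ltn_predL.
  by exists (Ordinal ip) => /=; rewrite -expgSr prednK //; exact: closed_gen_sub.
split; [split|].
- by exists (Ordinal p0); rewrite /= expg0 mulg1; exact: (sg1 sP).
- move=> h1 h2 [i Pi] [j Pj].
  have Hh : forall (k : nat) h, P (y ^+ k * h) -> H h.
    move=> k h Pk; have -> : h = (y ^+ k)^-1 * (y ^+ k * h) by rewrite mulKg.
    by apply: (sgM sH); [apply: (sgV sH); exact: (sgX _ sH) | exact: PH].
  apply: (@Qred _ (i + j * p.-1)).
  rewrite alg //; last first.
  + exact: abH (Hh _ _ Pj).
  + exact: abH (Hh _ _ Pi).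
  apply: (sgM sP) => //; apply: (sgM sP) => //; last exact: (sgV sP).
  apply: (sgX _ sP); exact: closed_gen_sub.
- have -> : [set h | exists i : 'I_p, P (y ^+ i * h)] =
      \bigcup_(i in [set: 'I_p]) [set h | P (y ^+ i * h)].
    by apply/seteqP; split=> h [i]; [exists i|exists i].
  apply: closed_bigcup; first exact: finite_finset.
  move=> i _; apply: closed_lmul => //; exact: (closed_gen_cs _).2.
Qed.

Lemma P_open : open_subgroup_of H P.
Proof.
split; first exact: sP; split; first exact: PH.
exists (~` \bigcup_(i in [set i : 'I_p | ~ P (y ^+ i)]) [set h | P (y ^+ i * h)]).
split.
  apply: closed_openC; apply: closed_bigcup; first exact: finite_finset.
  move=> i _; apply: closed_lmul => //; exact: (closed_gen_cs _).2.
apply/seteqP; split=> h.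
  move=> Ph; split; last exact: PH.
  move=> [i ni Pih]; apply: ni.
  have := sgM sP Pih (sgV sP Ph); by rewrite mulgK.
move=> [Uh Hh]; have [i Pi] := HsubQ Hh.
have [Pyi|nPyi] := pselect (P (y ^+ i)).
  have := sgM sP (sgV sP Pyi) Pi; by rewrite mulKg.
by exfalso; apply: Uh; exists i.
Qed.

Lemma P_max : P <> H -> maximal_open_subgroup_of H P.
Proof.
move=> nPH; split; [exact: P_open | exact: nPH |].
move=> L oL PL; have [sL [LH [V [oV eL]]]] := oL.
have [LP|nLP] := pselect (L `<=` P).
  by left; apply/seteqP; split.
right.
have [h [Lh nPh]] : exists h, L h /\ ~ P h.
  apply: contrapT => nex; apply: nLP => h Lh; apply: contrapT => nPh.
  by apply: nex; exists h.
have [i Pi] := HsubQ (LH h Lh).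
have Li : L (y ^+ i).
  have := sgM sL (PL _ Pi) (sgV sL Lh); by rewrite mulgK.
have i0 : 0 < i.
  case: i Pi {Li} => [[|i'] ip] //= Pi; exfalso; apply: nPh.
  by move: Pi; rewrite expg0 mul1g.
have Lp : L (y ^+ p) by apply: PL; exact: closed_gen_sub.
have cop : gcdn i p = 1%N.
  apply/eqP; rewrite -/(coprime i p) coprime_sym prime_coprime //.
  by rewrite gtnNdvd.
have Ly : L y.
  case: (egcdn i p) / (@egcdnP i p i0) => km kn e _.
  rewrite cop in e.
  have -> : y = (y ^+ (kn * p))^-1 * y ^+ (km * i).
    by rewrite e expgnDr expg1 mulKg.
  apply: (sgM sL); first apply: (sgV sL).
    by rewrite mulnC expgnA; exact: (sgX _ sL).
  by rewrite mulnC expgnA; exact: (sgX _ sL).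
have cL : closed L.
  by apply: (open_sub_closed hc sH _ oL); exact: (closed_gen_cs _).2.
apply/seteqP; split => //.
apply: (closed_gen_min (conj sL cL)).
by move=> _ ->.
Qed.

Lemma frat_cyc : frattini H `<=` P.
Proof.
move=> w [Hw hw]; have [e|ne] := pselect (P = H); first by rewrite e.
by apply: hw; exact: P_max.
Qed.

End Cyc.



Section Conj.
Context (G : topGroupType) (hc : continuous_group_ops G) (hs : hausdorff_space G).
Implicit Types (H K L M S : set G) (a x y u : G).

Definition pre a S : set G := [set u | S (u ^ a)].

Lemma preK a S : pre a^-1 (pre a S) = S.
Proof. by apply/seteqP; split=> u; rewrite /pre /= conjgKV. Qed.
Lemma preKV a S : pre a (pre a^-1 S) = S.
Proof. by apply/seteqP; split=> u; rewrite /pre /= conjgK. Qed.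

Lemma conjc a : continuous (fun u : G => u ^ a).
Proof.
have h1 := mulc hc (@idc G) (@cst_continuous G G a).
have h2 := mulc hc (@cst_continuous G G a^-1) h1.
exact: h2.
Qed.

Lemma pre_sg a S : is_subgroup S -> is_subgroup (pre a S).
Proof.
move=> [s1 sd]; split; first by rewrite /pre /= conj1g.
by move=> u v hu hv; rewrite /pre /= conjMg conjVg; exact: sd.
Qed.

Lemma pre_cs a S : closed_subgroup S -> closed_subgroup (pre a S).
Proof.
move=> [sS cS]; split; first exact: pre_sg.
by have /continuous_closedP := @conjc a; apply.
Qed.

Lemma pre_open_sub a H L : open_subgroup_of H L -> open_subgroup_of (pre a H) (pre a L).
Proof.
move=> [sL [LH [U [oU eL]]]]; split; first exact: pre_sg.
split; first by move=> u; exact: LH.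
exists (pre a U); split; first by have /continuousP := @conjc a; apply.
by rewrite eL.
Qed.

Lemma pre_max a H M : maximal_open_subgroup_of H M ->
  maximal_open_subgroup_of (pre a H) (pre a M).
Proof.
move=> [oM nMH mM]; split; first exact: pre_open_sub.
  by move=> e; apply: nMH; rewrite -(preK a M) e preK.
move=> L oL ML.
have oL' : open_subgroup_of H (pre a^-1 L).
  by rewrite -(preK a H); exact: pre_open_sub.
have : M `<=` pre a^-1 L by move=> u Mu; apply: ML; rewrite /pre /= conjgKV.
case/(mM _ oL') => e; [left|right]; by rewrite -(preKV a L) e.
Qed.

Lemma pre_frat a H : pre a (frattini H) `<=` frattini (pre a H).
Proof.
move=> x [Hx hx]; split => // K mK.
have := pre_max a^-1 mK; rewrite preK => /hx.
by rewrite /pre /= conjgK.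
Qed.

Lemma cg_conj a y : closed_gen [set y ^ a] = pre a^-1 (closed_gen [set y]).
Proof.
apply/seteqP; split.
  apply: closed_gen_min; first exact/pre_cs/closed_gen_cs.
  by move=> _ ->; rewrite /pre /= conjgK; exact: closed_gen_sub.
move=> u hu.
have : closed_gen [set y] `<=` pre a (closed_gen [set y ^ a]).
  apply: closed_gen_min; first exact/pre_cs/closed_gen_cs.
  by move=> _ ->; exact: closed_gen_sub.
by move/(_ _ hu); rewrite /pre /= conjgKV.
Qed.

End Conj.



Section Main.
Context (G : topGroupType) (hc : continuous_group_ops G) (hs : hausdorff_space G)
  (p : nat) (pp : prime p) (fi : frattini_injective G).
Implicit Types (a x y t : G).

Lemma cg1 : closed_gen [set (1 : G)] = [set 1].
Proof.
apply/seteqP; split; last by move=> _ ->; exact: closed_gen_sub.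
apply: closed_gen_min => //; split; last exact/accessible_closed_set1/hausdorff_accessible.
split => // u v -> ->; by rewrite mulgV.
Qed.

Lemma fg_cyc y : fg_subgroup (closed_gen [set y]).
Proof.
split; first exact: closed_gen_cs.
exists 1%N, (fun _ => y); congr closed_gen.
apply/seteqP; split=> u; first by move=> ->; exists ord0.
by case=> _ _ <-.
Qed.

Lemma frat_tor t : t ^+ p = 1 -> frattini (closed_gen [set t]) = [set 1].
Proof.
move=> tp; apply/seteqP; split.
  by move=> u /(frat_cyc hc hs pp); rewrite tp cg1.
move=> _ ->; split; first exact: (sg1 (closed_gen_cs _).1).
by move=> K [[sK _] _ _]; exact: (sg1 sK).
Qed.

Lemma torsion_free t : t ^+ p = 1 -> t = 1.
Proof.
move=> tp.
have e : closed_gen [set t] = closed_gen [set 1].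
  apply: fi; [exact: fg_cyc | exact: fg_cyc |].
  by rewrite frat_tor // frat_tor // expg1n.
have : closed_gen [set t] t by exact: closed_gen_sub.
by rewrite e cg1.
Qed.

Lemma comm_step a x : a * x ^+ p = x ^+ p * a -> a * x = x * a.
Proof.
move=> cax.
have cP : closed_gen [set x ^+ p] `<=` cent [set a].
  apply: closed_gen_min; first exact: cent_cs.
  by move=> _ -> _ ->.
have fix1 : forall w, closed_gen [set x ^+ p] w -> forall b, (b = a \/ b = a^-1) -> w ^ b = w.
  move=> w /cP /(_ a erefl) wa b [->|->].
    by rewrite conjgE wa mulKg.
  by rewrite conjgE invgK mulgA -wa mulgK.
have zp : (x ^ a) ^+ p = x ^+ p by rewrite -conjXg; apply: fix1 => //; [exact: closed_gen_sub|left].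
set H := closed_gen [set x].
set K := closed_gen [set x ^ a].
have eK : K = pre a^-1 H by rewrite /K cg_conj.
have eH : H = pre a K by rewrite eK preKV.
have eF : frattini H = frattini K.
  apply/seteqP; split=> w hw.
    have hw' := frat_cyc hc hs pp hw.
    rewrite eK; apply: pre_frat => //; rewrite /pre /=.
    by rewrite (fix1 _ hw') //; right.
  have hw' := frat_cyc hc hs pp hw; rewrite zp in hw'.
  rewrite eH; apply: pre_frat => //; rewrite /pre /=.
  by rewrite (fix1 _ hw') //; left.
have eHK : H = K by apply: fi; [exact: fg_cyc|exact: fg_cyc|].
have Hz : H (x ^ a) by rewrite eHK; exact: closed_gen_sub.
have Hx : H x by exact: closed_gen_sub.
have abH : abelian_set H by apply: (abelian_gen hc hs) => u v -> ->.
have sH : is_subgroup H := (closed_gen_cs _).1.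
have t1 : (x ^ a * x^-1) ^+ p = 1.
  rewrite expgMn; last first.
    by rewrite /commute; apply: abH => //; exact: (sgV sH).
  by rewrite zp expVgn mulgV.
have := torsion_free t1 => /divg1_eq.
by rewrite conjgE => /(congr1 (fun u => a * u)) /=; rewrite mulVKg => ->.
Qed.

End Main.

Theorem mainTheorem12 (p : nat) (G : topGroupType) :
  pro_p_group G p -> frattini_injective G ->
  forall A : set G, maximal_abelian_subgroup A -> isolated_subgroup p A.
Proof.
move=> [pp hc _ hs _] fi A [cA abA mA] x Axp.
have hS : forall a b, (A `|` [set x]) a -> (A `|` [set x]) b -> a * b = b * a.
  have cx : forall a, A a -> a * x = x * a.
    by move=> a Aa; apply: (comm_step hc hs pp fi); exact: abA.
  move=> a b [Aa|->] [Ab|->] //.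
  - exact: abA.
  - exact: cx.
  - by rewrite (cx _ Ab).
have eB := mA _ (closed_gen_cs _) (abelian_gen hc hs hS)
  (subset_trans (@subsetUl _ A [set x]) (@closed_gen_sub _ _)).
by rewrite -eB; apply: closed_gen_sub; right.
Qed.
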